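(* Let $n \ge 3$ be an integer and let $I$ be a degree-based topological index with coefficients $c_{12},c_{13},c_{22},c_{23},c_{33}$. Define $c'_{12} = c_{12}-4c_{22}+3c_{23}$, $c'_{13} = c_{13}-3c_{22}+2c_{23}$, $c'_{33} = c_{22}-2c_{23}+c_{33}$. If $c'_{13}>c'_{12}>-c'_{33}>0$, then the path $P_n$ on $n$ vertices is, up to isomorphism, the only tree in $\mathcal{G}_3(n,n-1)$ that minimizes $I$.
   Context: For integers $n,m$, $\mathcal{G}_3(n,m)$ denotes the set of simple connected undirected graphs (chemical graphs) with $n$ vertices, $m$ edges and maximum degree at most $3$; in particular $\mathcal{G}_3(n,n-1)$ is the set of trees of order $n$ with maximum degree at most $3$. For a graph $G$ and $1\le i\le j$, an $ij$-edge is an edge whose endpoints have degrees $i$ and $j$, and $m_{ij}$ denotes the number of $ij$-edges of $G$. A degree-based topological index $I$ is a function on chemical graphs of order $n\ge 3$ of the form $I(G)=c_{12}m_{12}+c_{13}m_{13}+c_{22}m_{22}+c_{23}m_{23}+c_{33}m_{33}$, where the $c_{ij}$ are fixed real numbers. *)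

(* Defs.v *)
From HB Require Import structures.
From mathcomp Require Import all_boot all_order all_fingroup all_algebra.
Set Implicit Arguments. Unset Strict Implicit. Unset Printing Implicit Defensive.
Import Order.TTheory GRing.Theory Num.Theory.

Definition simple_graph (n : nat) (g : rel 'I_n) : Prop :=
  irreflexive g /\ symmetric g.

Definition deg (n : nat) (g : rel 'I_n) (x : 'I_n) : nat :=
  #|[set y | g x y]|.

Definition nedges (n : nat) (g : rel 'I_n) : nat :=
  #|[set p : 'I_n * 'I_n | (p.1 < p.2)%N && g p.1 p.2]|.

Definition connected_graph (n : nat) (g : rel 'I_n) : Prop :=
  forall x y : 'I_n, connect g x y.

Definition max_deg_le (n : nat) (g : rel 'I_n) (d : nat) : Prop :=
  forall x : 'I_n, (deg g x <= d)%N.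

Definition chem_graph (n m : nat) (g : rel 'I_n) : Prop :=
  [/\ simple_graph g, connected_graph g, nedges g = m & max_deg_le g 3].

Definition m_ij (n : nat) (g : rel 'I_n) (i j : nat) : nat :=
  #|[set p : 'I_n * 'I_n | [&& (p.1 < p.2)%N, g p.1 p.2,
        minn (deg g p.1) (deg g p.2) == i & maxn (deg g p.1) (deg g p.2) == j]]|.

Definition topo_index (R : numDomainType) (c12 c13 c22 c23 c33 : R)
    (n : nat) (g : rel 'I_n) : R :=
  (c12 * (m_ij g 1 2)%:R + c13 * (m_ij g 1 3)%:R + c22 * (m_ij g 2 2)%:R
   + c23 * (m_ij g 2 3)%:R + c33 * (m_ij g 3 3)%:R)%R.

Definition path_graph (n : nat) : rel 'I_n :=
  fun x y => ((x : nat).+1 == y) || ((y : nat).+1 == x).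

Definition isomorphic (n : nat) (g1 g2 : rel 'I_n) : Prop :=
  exists f : {perm 'I_n}, forall x y, g1 x y = g2 (f x) (f y).

Arguments chem_graph n m g : clear implicits.
Arguments path_graph n : clear implicits.

(* Main.v *)
Require Import Defs.
From HB Require Import structures.
From mathcomp Require Import all_boot all_order all_fingroup all_algebra.
Import Order.TTheory GRing.Theory Num.Theory.
From mathcomp Require Import zify ring lra.
Set Implicit Arguments. Unset Strict Implicit. Unset Printing Implicit Defensive.
Section Tree.
Variable n : nat.
Variable g : rel 'I_n.
Hypothesis irr : irreflexive g.
Hypothesis sym : symmetric g.
Hypothesis conn : connected_graph g.
Variable r : 'I_n.

Definition Pd x k := [exists t : k.-tuple 'I_n, path g r t && (last r t == x)].

Lemma Pd_seq x p : path g r p -> last r p = x -> Pd x (size p).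
Proof. move=> hp hl; apply/existsP; exists (in_tuple p); by rewrite /= hp hl eqxx. Qed.

Lemma Pd_ex x : exists k, Pd x k.
Proof. have /connectP[p hp hl] := conn r x; exists (size p); exact: Pd_seq. Qed.

Definition dist x := ex_minn (Pd_ex x).

Lemma distP x : Pd x (dist x) /\ forall k, Pd x k -> dist x <= k.
Proof. rewrite /dist; by case: ex_minnP. Qed.

Lemma dist_r : dist r = 0.
Proof.
have [_ h] := distP r; have := h 0%N (Pd_seq (p := [::]) isT erefl); lia.
Qed.

Lemma dist_edge x y : g x y -> dist y <= (dist x).+1.
Proof.
move=> gxy; have [/existsP[t /andP[pt /eqP lt]] _] := distP x.
have [_ h] := distP y.
have pp : path g r (rcons t y) by rewrite rcons_path pt lt.
have := h _ (Pd_seq pp (last_rcons _ _ _)); rewrite size_rcons size_tuple; by [].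
Qed.

Lemma dist_par x : x != r -> exists y, g y x && ((dist y).+1 == dist x).
Proof.
move=> xr; have [/existsP[t /andP[pt /eqP lt]] _] := distP x.
have st := size_tuple t; move: (tval t) st pt lt => s st.
case/lastP: s st => [|p z] st.
  by move=> _ /= h; rewrite h eqxx in xr.
rewrite size_rcons in st.
rewrite rcons_path last_rcons => /andP[pp gz] zx; subst z.
exists (last r p); rewrite gz /=.
have [_ h] := distP (last r p); have := h _ (Pd_seq pp erefl).
have := dist_edge gz => H1 H2; rewrite -st in H1 *; by rewrite eqSS eqn_leq H2 -ltnS H1.
Qed.

Lemma dist_lt x : dist x < n.
Proof.
have /connectP[p hp ->] := conn r x.
case/shortenP: hp => p' pp' up' _.
have [_ h] := distP (last r p'); have := h _ (Pd_seq pp' erefl).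
have := max_card (mem (r :: p')); move: up' => /card_uniqP ->; rewrite card_ord /=; lia.
Qed.

Definition par x := odflt r [pick y | g y x && ((dist y).+1 == dist x)].

Lemma parP x : x != r -> g (par x) x /\ (dist (par x)).+1 = dist x.
Proof.
move=> xr; rewrite /par; case: pickP => [y /andP[h1 /eqP h2]|none] //=.
by have [y] := dist_par xr; rewrite none.
Qed.

Lemma par_neq x : x != r -> (par x == x) = false.
Proof. by move=> /parP[_ h]; apply/eqP => e; rewrite e in h; lia. Qed.

Definition phi (x : 'I_n) : 'I_n * 'I_n := if (x < par x)%N then (x, par x) else (par x, x).

Definition Eset := [set p : 'I_n * 'I_n | (p.1 < p.2)%N && g p.1 p.2].

Lemma phi_E x : x != r -> phi x \in Eset.
Proof.
move=> xr; have [h1 h2] := parP xr; have := par_neq xr.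
rewrite /phi inE; case: ifP => /= lt; first by rewrite lt sym h1.
move=> ne; rewrite h1 andbT.
have : (par x : nat) != x by rewrite -(inj_eq val_inj) in ne; rewrite ne.
lia.
Qed.

Lemma phi_inj : {in [set~ r] &, injective phi}.
Proof.
move=> x y; rewrite !inE => xr yr.
have [_ hx] := parP xr; have [_ hy] := parP yr.
rewrite /phi; case: ifP => _; case: ifP => _ [e1 e2]; try by []; [move: hx hy; rewrite e2 -e1 | move: hx hy; rewrite e1 -e2]; lia.
Qed.

Hypothesis ne : nedges g = n.-1.

Lemma Eset_phi : Eset = phi @: [set~ r].
Proof.
apply/eqP; rewrite eq_sym eqEcard; apply/andP; split.
  by apply/subsetP => p /imsetP[x xr ->]; apply: phi_E; rewrite !inE in xr.
rewrite card_in_imset; last exact: phi_inj.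
by rewrite cardsC1 card_ord -ne /nedges.
Qed.

Lemma tree_edge u v : g u v -> (v != r /\ par v = u) \/ (u != r /\ par u = v).
Proof.
move=> guv.
have key : forall u v : 'I_n, (u < v)%N -> g u v ->
     (v != r /\ par v = u) \/ (u != r /\ par u = v).
  move=> a b ab gab; have : (a, b) \in Eset by rewrite inE /= ab gab.
  rewrite Eset_phi => /imsetP[x xr]; rewrite !inE in xr.
  rewrite /phi; case: ifP => _ [e1 e2]; subst; [right|left]; by [].
have uv0 : (u : nat) != v.
  rewrite (inj_eq val_inj); apply/negP => /eqP e; by rewrite e irr in guv.
case: (ltngtP u v) => [uv|vu|e].
- exact: key.
- have gvu : g v u by rewrite sym.
  case: (key _ _ vu gvu) => [[h1 h2]|[h1 h2]]; [right|left]; by [].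
- by rewrite e eqxx in uv0.
Qed.

Lemma m33_le : (m_ij g 3 3 <= #|[set x | deg g x == 3]|)%N.
Proof.
apply: (leq_trans _ (leq_imset_card phi _)); apply: subset_leq_card.
apply/subsetP => p; rewrite inE => /and4P[lt gp mi ma].
have : p \in Eset by rewrite inE lt gp.
rewrite Eset_phi => /imsetP[x _ e].
have [d1 d2] : deg g p.1 = 3 /\ deg g p.2 = 3.
  move/eqP: mi; move/eqP: ma; move: (deg g p.1) (deg g p.2) => a b; lia.
apply/imsetP; exists x => //; rewrite inE; move: e; rewrite /phi.
by case: ifP => _ e; rewrite e /= in d1 d2; rewrite ?d1 ?d2.
Qed.

Hypothesis deg2 : forall x, (deg g x <= 2)%N.
Hypothesis leaf : deg g r = 1%N.

Lemma par_inj x y : x != r -> y != r -> par x = par y -> x = y.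
Proof.
move=> xr yr e; apply/eqP/negPn/negP => xy.
have [gx dx] := parP xr; have [gy dy] := parP yr.
have [zr|zr] := eqVneq (par x) r.
  have : (1 < deg g r)%N.
    apply/card_gt1P; exists x, y; rewrite !inE -zr gx e gy; by split.
  by rewrite leaf.
have [gz dz] := parP zr.
have gy' : g (par x) y by rewrite e.
have : (2 < deg g (par x))%N.
  apply/card_gt2P; exists x, y, (par (par x)); rewrite !inE gx gy' sym gz.
  split=> //; split=> //; apply/eqP => ee.
    move: dz dy; rewrite -ee -e; lia.
  move: dz dx; rewrite ee; lia.
by have := deg2 (par x); lia.
Qed.

Lemma dist_inj : injective dist.
Proof.
move=> x y e.
suff: forall k x y, dist x = k -> dist y = k -> x = y by move=> /(_ _ x y e erefl).
elim=> [|k IH] {e}x {}y.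
  have h : forall z, dist z = 0%N -> z = r.
    by move=> z dz; apply/eqP/negPn/negP => /parP[_]; rewrite dz.
  by move=> /h -> /h ->.
move=> dx dy.
have xr : x != r by apply/negP => /eqP xr; rewrite xr dist_r in dx.
have yr : y != r by apply/negP => /eqP yr; rewrite yr dist_r in dy.
have [_ ex] := parP xr; have [_ ey] := parP yr.
apply: par_inj => //; apply: IH; lia.
Qed.

Definition fo x : 'I_n := Ordinal (dist_lt x).

Lemma fo_inj : injective fo.
Proof. by move=> x y [] /dist_inj. Qed.

Lemma iso_path : isomorphic g (path_graph n).
Proof.
exists (perm fo_inj) => x y; rewrite !permE /path_graph /=.
apply/idP/idP.
  move/tree_edge => [[yr e]|[xr e]].
    by have [_ h] := parP yr; rewrite e in h; rewrite h eqxx.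
  by have [_ h] := parP xr; rewrite e in h; rewrite h eqxx orbT.
case/orP => /eqP h.
  have yr : y != r by apply/negP => /eqP yr; rewrite yr dist_r in h.
  have [gp hp] := parP yr.
  have <- : par y = x by apply: dist_inj; lia.
  exact: gp.
have xr : x != r by apply/negP => /eqP xr; rewrite xr dist_r in h.
have [gp hp] := parP xr.
have e : par x = y by apply: dist_inj; lia.
by rewrite sym -e.
Qed.

End Tree.
Section Count.
Variable n : nat.
Variable g : rel 'I_n.
Hypothesis irr : irreflexive g.
Hypothesis sym : symmetric g.

Local Open Scope ring_scope.

Lemma handshake (R : nmodType) (phi : 'I_n -> R) :
  \sum_(p : 'I_n * 'I_n | (p.1 < p.2)%N && g p.1 p.2) (phi p.1 + phi p.2) =
  \sum_x phi x *+ deg g x.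
Proof.
rewrite big_split /=.
rewrite [X in _ + X](reindex_inj (can_inj (@swap_pairK 'I_n 'I_n))) /=.
have -> : \sum_(p : 'I_n * 'I_n | (p.1 < p.2)%N && g p.1 p.2) phi p.1 +
          \sum_(p : 'I_n * 'I_n | (p.2 < p.1)%N && g p.2 p.1) phi p.1 =
          \sum_(p : 'I_n * 'I_n | g p.1 p.2) phi p.1.
  rewrite [RHS](bigID (fun p : 'I_n * 'I_n => (p.1 < p.2)%N)) /=.
  congr (_ + _); apply: eq_bigl => p; first by rewrite andbC.
  rewrite sym; case gp: (g p.1 p.2); rewrite ?andbF ?andbT //.
  have : (p.1 : nat) != p.2.
    by rewrite (inj_eq val_inj); apply/negP => /eqP e; rewrite e irr in gp.
  rewrite -leqNgt; lia.
have -> : \sum_(p : 'I_n * 'I_n | g p.1 p.2) phi p.1 =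
     \sum_x \sum_y (if g x y then phi x else 0).
  by rewrite pair_big /= big_mkcond /=.
apply: eq_bigr => x _.
rewrite -big_mkcond /= /deg.
rewrite (eq_bigl (fun y => y \in [set y | g x y])); last by move=> y; rewrite inE.
by rewrite sumr_const.
Qed.

Lemma card_sumR (R : pzSemiRingType) (P Q : pred ('I_n * 'I_n)) :
  (#|[set p | P p && Q p]|%:R : R) = \sum_(p | P p) (Q p)%:R.
Proof.
transitivity (\sum_(p in [set p | P p && Q p]) (1 : R)); first by rewrite sumr_const.
rewrite big_mkcond [RHS]big_mkcond /=; apply: eq_bigr => p _.
by rewrite inE; case: (P p); case: (Q p).
Qed.

End Count.
Local Open Scope ring_scope.

Lemma edge_arith (R : realFieldType) (a b : nat) :
  (1 <= a <= 3)%N -> (1 <= b <= 3)%N -> ~~ ((a == 1%N) && (b == 1%N)) ->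
  let I i j := (((minn a b == i) && (maxn a b == j))%:R : R) in
  [/\ (a == 1%N)%:R + (b == 1%N)%:R = I 1%N 2%N + I 1%N 3%N,
      (a == 2%N)%:R + (b == 2%N)%:R = I 1%N 2%N + 2 * I 2%N 2%N + I 2%N 3%N &
      (a == 3%N)%:R + (b == 3%N)%:R = I 1%N 3%N + I 2%N 3%N + 2 * I 3%N 3%N].
Proof.
move: a b => [|[|[|[|a]]]] [|[|[|[|b]]]] //= _ _ _; rewrite /minn /maxn /=; split; ring.
Qed.

Lemma vert_arith (R : realFieldType) (d : nat) : (1 <= d <= 3)%N ->
  [/\ (d%:R : R) = (d == 1%N)%:R + 2 * (d == 2%N)%:R + 3 * (d == 3%N)%:R,
      (1 : R) = (d == 1%N)%:R + (d == 2%N)%:R + (d == 3%N)%:R &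
      forall k, (d == k)%:R *+ d = (d == k)%:R *+ k :> R].
Proof.
move: d => [|[|[|[|d]]]] //= _; (split; [ring|ring|]); move=> k; case: eqP => [<-|_] //; by rewrite !mul0rn.
Qed.

Section Chem.
Variable n : nat.
Variable g : rel 'I_n.
Hypothesis n3 : (3 <= n)%N.
Hypothesis ch : chem_graph n n.-1 g.

Lemma ch_irr : irreflexive g. Proof. by case: ch => [[]]. Qed.
Lemma ch_sym : symmetric g. Proof. by case: ch => [[]]. Qed.
Lemma ch_conn : connected_graph g. Proof. by case: ch. Qed.
Lemma ch_ne : nedges g = n.-1. Proof. by case: ch. Qed.
Lemma ch_max : forall x, (deg g x <= 3)%N. Proof. by case: ch. Qed.

Lemma deg_pos x : (0 < deg g x)%N.
Proof.
have [y] : exists y, y \in [set~ x].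
  by apply/card_gt0P; rewrite cardsC1 card_ord; lia.
rewrite !inE => yx.
have /connectP[p pp ly] := ch_conn x y.
case: p pp ly => [|z p] /=; first by move=> _ e; rewrite e eqxx in yx.
move=> /andP[gxz _] _; apply/card_gt0P; exists z; by rewrite inE.
Qed.

Lemma deg13 x : (1 <= deg g x <= 3)%N.
Proof. by rewrite deg_pos ch_max. Qed.

Lemma nb1 u v : g u v -> deg g u = 1%N -> forall y, g u y -> y = v.
Proof.
move=> guv du y guy; have /cards1P[w e] : #|[set y | g u y]| == 1%N.
  by rewrite -/(deg g u) du.
have : v \in [set y | g u y] by rewrite inE.
have : y \in [set y | g u y] by rewrite inE.
by rewrite e !inE => /eqP -> /eqP ->.
Qed.

Lemma no11 u v : g u v -> deg g u = 1%N -> deg g v = 1%N -> False.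
Proof.
move=> guv du dv.
have gvu : g v u by rewrite ch_sym.
have nu := nb1 guv du; have nv := nb1 gvu dv.
have [w] : exists w, w \in [set~ u] :\ v.
  apply/card_gt0P; have := cardsD1 v [set~ u]; rewrite cardsC1 card_ord.
  case: (v \in [set~ u]) => /=; lia.
rewrite !inE => /andP[wv wu].
pose a := [pred z | (z == u) || (z == v)].
have cl : closed g a.
  apply: intro_closed; first exact: sym_connect_sym ch_sym.
  move=> x y gxy; rewrite !inE => /orP[] /eqP e; subst x.
    by rewrite (nu _ gxy) eqxx orbT.
  by rewrite (nv _ gxy) eqxx.
have := closed_connect cl (ch_conn u w); rewrite !inE eqxx /=.
by rewrite (negbTE wu) (negbTE wv).
Qed.

Section R.
Variable R : realFieldType.

Let M i j := ((m_ij g i j)%:R : R).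
Let N k := (#|[set x | deg g x == k]|%:R : R).

Lemma M_sum i j : M i j = \sum_(p : 'I_n * 'I_n | (p.1 < p.2)%N && g p.1 p.2)
   ((minn (deg g p.1) (deg g p.2) == i) && (maxn (deg g p.1) (deg g p.2) == j))%:R.
Proof.
rewrite /M -(card_sumR R); congr (_%:R); apply: eq_card => p; by rewrite !inE andbA.
Qed.

Lemma N_sum k : N k = \sum_x (deg g x == k)%:R.
Proof.
rewrite /N; transitivity (\sum_(x in [set x | deg g x == k]) (1 : R)).
  by rewrite sumr_const.
rewrite big_mkcond /=; apply: eq_bigr => x _; rewrite inE; by case: (_ == _).
Qed.

Lemma Nk_hand k : \sum_x (deg g x == k)%:R *+ deg g x = N k * k%:R.
Proof.
rewrite N_sum mulr_suml; apply: eq_bigr => x _.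
by have [_ _ ->] := vert_arith R (deg13 x); rewrite mulr_natr.
Qed.

Lemma edge_ok (p : 'I_n * 'I_n) : (p.1 < p.2)%N && g p.1 p.2 ->
  ~~ ((deg g p.1 == 1%N) && (deg g p.2 == 1%N)).
Proof.
move=> /andP[_ gp]; apply/negP => /andP[/eqP a /eqP b]; exact: no11 gp a b.
Qed.

Lemma ident :
  [/\ N 1 = M 1 2 + M 1 3,
      N 2 * 2 = M 1 2 + 2 * M 2 2 + M 2 3,
      N 3 * 3 = M 1 3 + M 2 3 + 2 * M 3 3,
      N 1 + N 2 + N 3 = n%:R &
      N 1 + 2 * N 2 + 3 * N 3 = 2 * (n%:R - 1)].
Proof.
have H k := handshake ch_irr ch_sym (fun x => ((deg g x == k)%:R : R)).
have E (p : 'I_n * 'I_n) (hp : (p.1 < p.2)%N && g p.1 p.2) :=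
  edge_arith R (deg13 p.1) (deg13 p.2) (edge_ok hp).
split.
- have := H 1%N; rewrite Nk_hand mulr1 => <-.
  rewrite !M_sum -big_split /=; apply: eq_bigr => p hp; by case: (E p hp).
- have := H 2%N; rewrite Nk_hand => <-.
  rewrite !M_sum mulr_sumr -!big_split /=; apply: eq_bigr => p hp; by case: (E p hp).
- have := H 3%N; rewrite Nk_hand => <-.
  rewrite !M_sum mulr_sumr -!big_split /=; apply: eq_bigr => p hp; by case: (E p hp).
- rewrite !N_sum -!big_split /=.
  transitivity (\sum_(x : 'I_n) (1 : R)); last by rewrite sumr_const card_ord.
  by apply: eq_bigr => x _; have [_ e _] := vert_arith R (deg13 x); rewrite -e.
have := handshake ch_irr ch_sym (fun x => (1 : R)).
have -> : \sum_x (1 : R) *+ deg g x = N 1 + 2 * N 2 + 3 * N 3.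
  rewrite !N_sum !mulr_sumr -!big_split /=; apply: eq_bigr => x _.
  by have [<- _ _] := vert_arith R (deg13 x).
move=> <-.
have := card_sumR R (fun p : 'I_n * 'I_n => (p.1 < p.2)%N && g p.1 p.2) xpredT.
have -> : #|[set p | (fun p : 'I_n * 'I_n => (p.1 < p.2)%N && g p.1 p.2) p && xpredT p]| = n.-1.
  rewrite -ch_ne /nedges; apply: eq_card => p; by rewrite !inE andbT.
move=> e.
have n0 : (0 < n)%N by lia.
have -> : (n%:R : R) - 1 = (n.-1)%:R by rewrite -{1}(prednK n0) -addn1 natrD addrK.
rewrite e mulr_sumr; apply: eq_bigr => p _; rewrite /=; ring.
Qed.

End R.
End Chem.
Section PathG.
Variable n : nat.
Hypothesis n3 : (3 <= n)%N.

Lemma path_irr : irreflexive (path_graph n).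
Proof. move=> x; rewrite /path_graph; apply/negbTE; rewrite negb_or; apply/andP; split; apply/eqP; lia. Qed.

Lemma path_sym : symmetric (path_graph n).
Proof. by move=> x y; rewrite /path_graph orbC. Qed.

Lemma path_deg x : (deg (path_graph n) x <= 2)%N.
Proof.
case: n x n3 => // m x _.
apply: (leq_trans (subset_leq_card (B := [set inord x.+1; inord x.-1]) _)).
  apply/subsetP => y; rewrite !inE /path_graph => /orP[] /eqP e; apply/orP.
    by left; apply/eqP/val_inj; rewrite /= -e inordK ?e ?ltn_ord.
  by right; apply/eqP/val_inj; rewrite /= -e /= inordK ?ltn_ord.
by rewrite cards2; case: (_ != _).
Qed.

Lemma path_conn : connected_graph (path_graph n).
Proof.
have sc := sym_connect_sym path_sym.
suff H : forall k (i j : 'I_n), (j : nat) = (i + k)%N -> connect (path_graph n) i j.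
  move=> i j; case: (leqP i j) => ij.
    by apply: (H (j - i)%N); lia.
  by rewrite sc; apply: (H (i - j)%N); lia.
elim=> [|k IH] i j e.
  by have -> : j = i by apply: val_inj; rewrite /= e addn0.
have hm : (i + k < n)%N by have := ltn_ord j; lia.
apply: (connect_trans (IH i (Ordinal hm) _)) => //.
by apply: connect1; rewrite /path_graph /= e addnS eqxx.
Qed.

Lemma path_ne : nedges (path_graph n) = n.-1.
Proof.
case: n n3 => // m _ /=; rewrite /nedges.
pose h (x : 'I_m.+1) : 'I_m.+1 * 'I_m.+1 := (x, inord x.+1).
have -> : [set p : 'I_m.+1 * 'I_m.+1 | (p.1 < p.2)%N && path_graph m.+1 p.1 p.2]
          = h @: [set~ ord_max].
  apply/setP => p; apply/idP/idP.
    rewrite inE /path_graph => /andP[lt /orP[] /eqP e]; last by lia.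
    apply/imsetP; exists p.1.
      rewrite !inE; apply/negP => /eqP ee; have := ltn_ord p.2; rewrite -e ee /=; lia.
    case: p lt e => a b /= lt e; congr (_, _); apply: val_inj; rewrite /= -e inordK //; rewrite e; exact: ltn_ord.
  case/imsetP => x; rewrite !inE => xm ->; rewrite /h /path_graph /=.
  have xl : (x < m)%N.
    have := ltn_ord x; move: xm; rewrite -(inj_eq val_inj) /=; lia.
  rewrite inordK; last by lia.
  by rewrite ltnSn eqxx.
rewrite card_in_imset ?cardsC1 ?card_ord //.
by move=> x y _ _ [].
Qed.

Lemma path_chem : chem_graph n n.-1 (path_graph n).
Proof.
split; [split; [exact: path_irr | exact: path_sym] | exact: path_conn | exact: path_ne |].
move=> x; apply: leq_trans (path_deg x) _; done.
Qed.

End PathG.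
Section Main.
Variable R : realFieldType.
Variables c12 c13 c22 c23 c33 : R.
Variable n : nat.
Hypothesis n3 : (3 <= n)%N.

Lemma key (g : rel 'I_n) : chem_graph n n.-1 g ->
  topo_index c12 c13 c22 c23 c33 g =
  c22 * (n%:R + 5) - 6 * c23 + (c12 - 4 * c22 + 3 * c23) * (m_ij g 1 2)%:R
  + (c13 - 3 * c22 + 2 * c23) * (m_ij g 1 3)%:R
  + (c22 - 2 * c23 + c33) * (m_ij g 3 3)%:R.
Proof.
move=> ch; have [h1 h2 h3 h4 h5] := ident n3 ch R.
have e23 : ((m_ij g 2 3)%:R : R) = 3 * (m_ij g 1 2)%:R + 2 * (m_ij g 1 3)%:R
   - 2 * (m_ij g 3 3)%:R - 6 by lra.
have e22 : ((m_ij g 2 2)%:R : R) = n%:R + 5 - 4 * (m_ij g 1 2)%:R - 3 * (m_ij g 1 3)%:R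
   + (m_ij g 3 3)%:R by lra.
rewrite /topo_index e22 e23; ring.
Qed.

Lemma F_ge (g : rel 'I_n) : chem_graph n n.-1 g ->
  let a := c12 - 4 * c22 + 3 * c23 in
  let b := c13 - 3 * c22 + 2 * c23 in
  let c := c22 - 2 * c23 + c33 in
  a < b -> - c < a -> 0 < - c ->
  2 * a <= a * (m_ij g 1 2)%:R + b * (m_ij g 1 3)%:R + c * (m_ij g 3 3)%:R /\
  (a * (m_ij g 1 2)%:R + b * (m_ij g 1 3)%:R + c * (m_ij g 3 3)%:R <= 2 * a ->
   #|[set x | deg g x == 3%N]| = 0%N).
Proof.
move=> ch a b c ab ca c0; have [h1 h2 h3 h4 h5] := ident n3 ch R.
have r0 : (0 < n)%N by lia.
have m33 : ((m_ij g 3 3)%:R : R) <= #|[set x | deg g x == 3%N]|%:R.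
  rewrite ler_nat; exact: (m33_le (ch_sym ch) (ch_conn ch) (Ordinal r0) (ch_ne ch)).
have p13 : (0 : R) <= (m_ij g 1 3)%:R by rewrite ler0n.
have p23 : (0 : R) <= (m_ij g 2 3)%:R by rewrite ler0n.
have p33 : (0 : R) <= (m_ij g 3 3)%:R by rewrite ler0n.
have q1 : 0 <= (b - a) * (m_ij g 1 3)%:R by apply: mulr_ge0; lra.
have q2 : 0 <= (- c) * (#|[set x | deg g x == 3%N]|%:R - (m_ij g 3 3)%:R).
  by apply: mulr_ge0; lra.
have N3p : (0 : R) <= #|[set x | deg g x == 3%N]|%:R by rewrite ler0n.
have q3 : 0 <= (a + c) * #|[set x | deg g x == 3%N]|%:R by apply: mulr_ge0; lra.
split; first by nra.
move=> hle.
have : (a + c) * #|[set x | deg g x == 3%N]|%:R <= 0 by nra.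
move=> q4.
have : (#|[set x | deg g x == 3%N]|%:R : R) <= 0.
  rewrite -(@ler_pM2l _ (a + c)) ?mulr0 //; lra.
move=> hh; apply/eqP; rewrite -leqn0 -(ler_nat R); exact: hh.
Qed.

Lemma F_eq (g : rel 'I_n) : chem_graph n n.-1 g ->
  #|[set x | deg g x == 3%N]| = 0%N ->
  let a := c12 - 4 * c22 + 3 * c23 in
  let b := c13 - 3 * c22 + 2 * c23 in
  let c := c22 - 2 * c23 + c33 in
  a * (m_ij g 1 2)%:R + b * (m_ij g 1 3)%:R + c * (m_ij g 3 3)%:R = 2 * a.
Proof.
move=> ch z a b c; have [h1 h2 h3 h4 h5] := ident n3 ch R.
rewrite z in h1 h2 h3 h4 h5.
have p13 : (0 : R) <= (m_ij g 1 3)%:R by rewrite ler0n.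
have p23 : (0 : R) <= (m_ij g 2 3)%:R by rewrite ler0n.
have p33 : (0 : R) <= (m_ij g 3 3)%:R by rewrite ler0n.
have e13 : ((m_ij g 1 3)%:R : R) = 0 by lra.
have e33 : ((m_ij g 3 3)%:R : R) = 0 by lra.
have e12 : ((m_ij g 1 2)%:R : R) = 2 by lra.
by rewrite e13 e33 e12; ring.
Qed.

End Main.

Lemma deg_iso n (g : rel 'I_n) : (3 <= n)%N -> isomorphic g (path_graph n) -> forall x, (deg g x <= 2)%N.
Proof.
rewrite /isomorphic => n3 -[s h] x; rewrite /deg.
have -> : [set y | g x y] = s @^-1: [set z | path_graph n (s x) z].
  by apply/setP => y; rewrite !inE h.
rewrite card_preimset; last exact: perm_inj.
exact: path_deg.
Qed.

Lemma iso_of_deg2 n (g : rel 'I_n) : (3 <= n)%N -> chem_graph n n.-1 g ->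
  (forall x, (deg g x <= 2)%N) -> isomorphic g (path_graph n).
Proof.
move=> n3 ch h.
have [h1 h2 h3 h4 h5] := ident n3 ch rat.
have z : #|[set x | deg g x == 3%N]| = 0%N.
  apply/eqP; rewrite cards_eq0; apply/eqP/setP => x; rewrite !inE.
  by have := h x; case: eqP => // ->.
rewrite z in h1 h2 h3 h4 h5.
have : (0 < #|[set x | deg g x == 1%N]|)%N.
  have : (0 : rat) < #|[set x | deg g x == 1%N]|%:R by lra.
  by rewrite ltr0n.
case/card_gt0P => r; rewrite inE => /eqP hr.
exact: (iso_path (ch_irr ch) (ch_sym ch) (ch_conn ch) (ch_ne ch) h hr).
Qed.

Unset Implicit Arguments.
Local Open Scope ring_scope.

Theorem corollary1 (R : realFieldType) (c12 c13 c22 c23 c33 : R) (n : nat) :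
  (3 <= n)%N ->
  let c'12 := c12 - 4 * c22 + 3 * c23 in
  let c'13 := c13 - 3 * c22 + 2 * c23 in
  let c'33 := c22 - 2 * c23 + c33 in
  c'12 < c'13 -> - c'33 < c'12 -> 0 < - c'33 ->
  chem_graph n n.-1 (path_graph n) /\
  forall T : rel 'I_n, chem_graph n n.-1 T ->
    ((forall T' : rel 'I_n, chem_graph n n.-1 T' ->
        topo_index c12 c13 c22 c23 c33 T <= topo_index c12 c13 c22 c23 c33 T')
     <-> isomorphic T (path_graph n)).
Proof.
move=> n3; cbv zeta => ab ca c0.
have pc := path_chem n3.
split; first exact: pc.
have zP : #|[set x | deg (path_graph n) x == 3%N]| = 0%N.
  apply/eqP; rewrite cards_eq0; apply/eqP/setP => x; rewrite !inE.
  by have := path_deg n3 x; case: eqP => // ->.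
have eP := F_eq c12 c13 c22 c23 c33 n3 pc zP; cbv zeta in eP.
have kP := key c12 c13 c22 c23 c33 n3 pc.
move=> T cT; split.
- move=> minT.
  have hP := minT _ pc.
  rewrite (key c12 c13 c22 c23 c33 n3 cT) kP in hP.
  have [geT leT] := (@F_ge R c12 c13 c22 c23 c33 n n3 T cT) ab ca c0.
  have zT := leT ltac:(lra).
  apply: (iso_of_deg2 n3 cT) => x.
  have hx := ch_max cT x.
  case: (ltngtP (deg T x) 3) => [lt|gt|e]; [by []|by move: hx; rewrite leqNgt gt|].
  have : (0 < #|[set x | deg T x == 3%N]|)%N by apply/card_gt0P; exists x; rewrite inE e.
  by rewrite zT.
- move=> iso T' cT'.
  have zT : #|[set x | deg T x == 3%N]| = 0%N.
    apply/eqP; rewrite cards_eq0; apply/eqP/setP => x; rewrite !inE.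
    by have := deg_iso n3 iso x; case: eqP => // ->.
  have eT := F_eq c12 c13 c22 c23 c33 n3 cT zT; cbv zeta in eT.
  have [geT' _] := (@F_ge R c12 c13 c22 c23 c33 n n3 T' cT') ab ca c0.
  rewrite (key c12 c13 c22 c23 c33 n3 cT) (key c12 c13 c22 c23 c33 n3 cT').
  lra.
Qed.
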